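(* Let $P,Q$ be persistence diagrams satisfying the standing assumptions, and let $d_T^{per}(P,Q)$ be defined from the randomly shifted quadtree as in the context. Then there is an absolute constant $C'$ such that $$\mathbb{E}\big[d_T^{per}(P,Q)\big]\le C'\log\Delta\cdot d_W(P,Q),$$ the expectation being over the random shift.
   Context: A persistence diagram is a finite multiset of points in $\mathbb{R}^2$. Let $L=\{(x,x)\mid x\in\mathbb{R}\}$ be the diagonal and $\pi(p)=\big(\tfrac{p.x+p.y}{2},\tfrac{p.x+p.y}{2}\big)$. An augmented matching for finite multisets $A,B\subset\mathbb{R}^2$ is a subset $\Gamma\subset (A\cup\pi(B))\times(B\cup\pi(A))$ such that each element of $A$ and of $B$ (with multiplicity) appears in exactly one pair, and each pair $(a,b)$ is of the form (1) $a\in A,b\in B$, (2) $a\in A,b=\pi(a)$, or (3) $a=\pi(b),b\in B$. $d_W(P,Q)=\min_\Gamma\sum_{(p,q)\in\Gamma}\|p-q\|_2$ over augmented matchings for $P,Q$. Standing assumptions: with $X=P\uplus Q$, the minimum distance between distinct points of $X$ is $1$, the minimum distance from any point of $X$ to $L$ is $1$, $X\subseteq[0,\Delta]^2$ with $\Delta$ (the spread of $X$) a power of $2$. Randomly shifted quadtree: $H$ is $[-\Delta,\Delta]^2$ translated by a random vector with coordinates chosen uniformly in $[0,\Delta]$. For $i=-1,0,\dots,\log_2\Delta$, $G_i$ is the grid of cells of side $2^i$ obtained by repeatedly halving $H$ in each coordinate. A cell is terminal if it intersects $L$. With $P(c),Q(c)$ the number of points of $P$, $Q$ in cell $c$, $$d_T^{per}(P,Q)=\sum_{i=-1}^{\log_2\Delta}2^i\sum_{c\in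 G_i,\ c\text{ non-terminal}}|P(c)-Q(c)|.$$ *)

(* Defs.v *)
From HB Require Import structures.
From mathcomp Require Import all_boot all_order all_algebra.
From mathcomp Require Import all_classical all_reals all_analysis.
Set Implicit Arguments. Unset Strict Implicit. Unset Printing Implicit Defensive.
Import Order.TTheory GRing.Theory Num.Theory.
Local Open Scope ring_scope.

Section PD.
Variable R : realType.

(* A pt of R^2. Persistence diagrams are finite multisets, encoded as seqs
   (multiplicity = number of occurrences). *)
Definition pt := (R * R)%type.

Definition dist2 (p q : pt) : R :=
  Num.sqrt ((p.1 - q.1) ^+ 2 + (p.2 - q.2) ^+ 2).

Definition proj (p : pt) : pt :=
  ((p.1 + p.2) / 2, (p.1 + p.2) / 2).

Definition distL (p : pt) : R := dist2 p (proj p).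

(* An augmented matching between P (size m) and Q (size n) is encoded by a
   partial injection f : 'I_m -> option 'I_n: f i = Some j means the pair
   (P_i, Q_j) (type (1)); f i = None means (P_i, pi(P_i)) (type (2)); every
   Q_j not in the image of f is paired as (pi(Q_j), Q_j) (type (3)). *)
Definition is_aug_matching (m n : nat) (f : {ffun 'I_m -> option 'I_n}) : bool :=
  [forall i, forall i', (f i != None) ==> (f i == f i') ==> (i == i')].

Definition matching_cost (P Q : seq pt)
    (f : {ffun 'I_(size P) -> option 'I_(size Q)}) : R :=
  \sum_(i < size P)
     (match f i with
      | Some j => dist2 (nth (0,0) P i) (nth (0,0) Q j)
      | None => dist2 (nth (0,0) P i) (proj (nth (0,0) P i))
      end)
  + \sum_(j < size Q | [forall i, f i != Some j])
      dist2 (proj (nth (0,0) Q j)) (nth (0,0) Q j).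

Definition empty_matching (m n : nat) : {ffun 'I_m -> option 'I_n} :=
  [ffun=> None].

(* d_W(P,Q): minimum of the cost over all augmented matchings (the set is finite
   and contains the empty matching, used as the seed of the iterated min). *)
Definition dW (P Q : seq pt) : R :=
  \big[Order.min/@matching_cost P Q (empty_matching _ _)]_(f | is_aug_matching f)
     @matching_cost P Q f.

(* Levels i = -1..k are indexed by j : 'I_(k+2) with i = j - 1,
   so the side of a cell at level j is 2^j / 2 = 2^i, and each axis of
   H = [-Delta,Delta]^2 + (a,b) is split into 2^(k+2-j) = 2 Delta / 2^i cells. *)
Definition Delta (k : nat) : R := 2 ^+ k.
Definition side (j : nat) : R := 2 ^+ j / 2.
Definition ncells (k j : nat) : nat := 2 ^ (k + 2 - j).

Definition in_cell (k j u v : nat) (a b : R) (p : pt) : bool :=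
  [&& a - Delta k + u%:R * side j <= p.1 ,
      p.1 < a - Delta k + u.+1%:R * side j ,
      b - Delta k + v%:R * side j <= p.2 &
      p.2 < b - Delta k + v.+1%:R * side j].

Definition terminal (k j u v : nat) (a b : R) : Prop :=
  exists x : R, in_cell k j u v a b (x, x).

Definition cnt (k j u v : nat) (a b : R) (P : seq pt) : nat :=
  count (in_cell k j u v a b) P.

Definition cell_term (k j u v : nat) (a b : R) (P Q : seq pt) : R :=
  if `[< terminal k j u v a b >] then 0
  else `| (cnt k j u v a b P)%:R - (cnt k j u v a b Q)%:R |.

Definition dTper (k : nat) (a b : R) (P Q : seq pt) : R :=
  \sum_(j < k.+2) side j *
    \sum_(u < ncells k j) \sum_(v < ncells k j) cell_term k j u v a b P Q.

Definition in_box (k : nat) (p : pt) : bool :=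
  (0 <= p.1 <= Delta k) && (0 <= p.2 <= Delta k).

Definition min_sep_is_1 (X : seq pt) : Prop :=
  (forall p q, p \in X -> q \in X -> p != q -> 1 <= dist2 p q) /\
  ((exists p q, [/\ p \in X, q \in X & p != q]) ->
     exists p q, [/\ p \in X, q \in X, p != q & dist2 p q = 1]).

Definition min_distL_is_1 (X : seq pt) : Prop :=
  (forall p, p \in X -> 1 <= distL p) /\
  (X != [::] -> exists p, p \in X /\ distL p = 1).

Definition standing_assumptions (k : nat) (P Q : seq pt) : Prop :=
  let X := P ++ Q in
  [/\ min_sep_is_1 X, min_distL_is_1 X & all (in_box k) X].

End PD.

(* Main.v *)
Require Import Defs.
From HB Require Import structures.
From mathcomp Require Import all_boot all_order all_algebra.
From mathcomp Require Import all_classical all_reals all_analysis.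
From mathcomp Require Import measurable_realfun.
From mathcomp Require Import lra ring.
Set Implicit Arguments. Unset Strict Implicit. Unset Printing Implicit Defensive.
Import Order.TTheory GRing.Theory Num.Theory.
Local Open Scope ring_scope.

Local Open Scope classical_set_scope.

Section Integ.
Variable R : realType.
Local Notation mu := (@lebesgue_measure R).

Lemma le_int_nm (D : set R) (f g : R -> \bar R) :
  (forall x, D x -> (0 <= f x)%E) -> (forall x, D x -> (f x <= g x)%E) ->
  (\int[mu]_(x in D) f x <= \int[mu]_(x in D) g x)%E.
Proof.
move=> f0 fg.
have g0 : forall x, D x -> (0 <= g x)%E by move=> x Dx; exact: le_trans (f0 x Dx) (fg x Dx).
rewrite [X in (X <= _)%E]ge0_integralE // [X in (_ <= X)%E]ge0_integralE //.
apply: ereal_sup_le => _ [h /= hf <-]; exists h => //= x.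
apply: le_trans (hf x) _; rewrite /patch; case: ifP => // xD; apply: fg; exact: set_mem.
Qed.

Definition Good (D : set R) (g : R -> R) (B : R) :=
  [/\ measurable_fun D g, (forall x, D x -> 0 <= g x) &
     (\int[mu]_(x in D) (g x)%:E <= B%:E)%E].

Variable D : set R.
Hypothesis mD : measurable D.

Lemma Good_ext {g g' B} : (forall x, g x = g' x) -> Good D g B -> Good D g' B.
Proof. by move=> e; have -> : g = g' by apply: funext. Qed.

Lemma Good_le g B B' : B <= B' -> Good D g B -> Good D g B'.
Proof. by move=> le [m p i]; split => //; apply: le_trans i _; rewrite lee_fin. Qed.

Lemma Good_add g1 g2 B1 B2 : Good D g1 B1 -> Good D g2 B2 ->
  Good D (fun x => g1 x + g2 x) (B1 + B2).
Proof.
move=> [m1 p1 i1] [m2 p2 i2]; split.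
- exact: measurable_funD.
- by move=> x Dx; rewrite addr_ge0 ?p1 ?p2.
- under eq_integral do rewrite EFinD.
  rewrite ge0_integralD //; first by rewrite EFinD leeD.
  all: try by move=> x Dx; rewrite lee_fin ?p1 ?p2.
  all: by apply/measurable_EFinP.
Qed.

Lemma Good_scale c g B : 0 <= c -> Good D g B -> Good D (fun x => c * g x) (c * B).
Proof.
move=> c0 [m p i]; split.
- by apply: measurable_funM => //; exact: measurable_cst.
- by move=> x Dx; rewrite mulr_ge0 ?p.
- under eq_integral do rewrite EFinM.
  rewrite ge0_integralZl //; first by rewrite EFinM lee_wpmul2l // lee_fin.
  all: try by move=> x Dx; rewrite lee_fin ?p.
  all: by apply/measurable_EFinP.
Qed.

Lemma Good_0 : Good D (fun => 0) 0.
Proof.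
split => //.
by rewrite integral0_eq.
Qed.

Lemma Good_sum (I : Type) (r : seq I) (P : pred I) (g : I -> R -> R) (B : I -> R) :
  (forall i, P i -> Good D (g i) (B i)) ->
  Good D (fun x => \sum_(i <- r | P i) g i x) (\sum_(i <- r | P i) B i).
Proof.
move=> H; elim: r => [|h t IH].
  by rewrite big_nil; apply: (Good_ext _ Good_0) => x; rewrite big_nil.
rewrite big_cons; case: ifP => Ph.
  apply: (Good_ext _ (Good_add (H _ Ph) IH)) => x; by rewrite big_cons Ph.
by apply: (Good_ext _ IH) => x; rewrite big_cons Ph.
Qed.

Lemma Good_ind (l r : R) : l <= r ->
  Good D (fun x => ((l < x) && (x <= r))%:R) (r - l).
Proof.
move=> lr.
have E : forall x, ((l < x) && (x <= r))%:R = \1_(`]l, r]%classic) x :> R.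
  move=> x; rewrite indicE; case Hx: ((l < x) && (x <= r)).
    by rewrite mem_set //= in_itv /= Hx.
  by rewrite memNset //= in_itv /= Hx.
apply: (Good_ext (fun x => esym (E x))); split.
- by apply: measurable_indic.
- by move=> x _; rewrite indicE.
- rewrite integral_indic //.
  apply: le_trans (measureIl _ _ _) _ => //.
  change (lebesgue_measure (`]l, r]%classic : set R) <= (r - l)%:E)%E; rewrite lebesgue_measure_itv. rewrite /=; case: ifP => _; first by rewrite -EFinD.
  by rewrite lee_fin subr_ge0.
Qed.

End Integ.

Section Integ2.
Variable R : realType.
Local Notation mu := (@lebesgue_measure R).

Lemma Good_cst (Dl : R) c : 0 <= Dl -> 0 <= c -> Good `[0, Dl] (fun => c) (c * Dl).
Proof.
move=> D0 c0; split => //.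
rewrite (_ : (fun x : R => c%:E) = cst c%:E) // integral_cst //.
  change (c%:E * lebesgue_measure (`[0%R, Dl]%classic : set R) <= (c * Dl)%:E)%E.
  rewrite lebesgue_measure_itv /=; case: ifP => _.
    by rewrite sube0 -EFinM.
  by rewrite mule0 lee_fin mulr_ge0.
Qed.

Lemma two_dim (Dl : R) (F : R -> R -> R) (G1 G2 : R -> R) B1 B2 :
  0 <= Dl ->
  (forall a b, 0 <= F a b) -> (forall a b, F a b <= G1 a + G2 b) ->
  Good `[0, Dl] G1 B1 -> Good `[0, Dl] G2 B2 ->
  (\int[mu]_(a in `[0%R, Dl]) \int[mu]_(b in `[0%R, Dl]) (F a b)%:E
     <= ((B1 + B2) * Dl)%:E)%E.
Proof.
move=> D0 F0 FG g1 g2.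
have mD : measurable (`[0, Dl]%classic : set R) by [].
have g1' := g1; case: g1' => _ G10 _.
have g2' := g2; case: g2' => _ G20 _.
have B20 : 0 <= B2.
  case: g2 => _ _ i; rewrite -lee_fin; apply: le_trans i.
  by apply: integral_ge0 => x Dx; rewrite lee_fin G20.
have H : Good `[0, Dl] (fun a => G1 a * Dl + B2) (B1 * Dl + B2 * Dl).
  apply: Good_add => //; last exact: Good_cst.
  apply: (Good_ext (g := fun a => Dl * G1 a)); first by move=> x; rewrite mulrC.
  by rewrite mulrC; apply: Good_scale.
case: H => _ _ I; rewrite mulrDl; apply: le_trans I.
apply: le_int_nm.
  by move=> a _; apply: integral_ge0 => b _; rewrite lee_fin.
move=> a Da.
have H : Good `[0, Dl] (fun b => G1 a + G2 b) (G1 a * Dl + B2).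
  by apply: Good_add => //; apply: Good_cst => //; exact: G10.
case: H => _ _ I; apply: le_trans I.
apply: le_int_nm; first by move=> b _; rewrite lee_fin.
by move=> b _; rewrite lee_fin.
Qed.

End Integ2.

Local Close Scope classical_set_scope.


Section Comb.
Variable R : realType.
Variable k : nat.
Local Notation Dl := (Delta R k).
Local Notation s := (side R).

Lemma side_gt0 j : 0 < s j.
Proof. by rewrite /side divr_gt0 // exprn_gt0. Qed.

Definition strip (t x : R) (j u : nat) : bool :=
  (t - Dl + u%:R * s j <= x) && (x < t - Dl + u.+1%:R * s j).

Lemma in_cellE j u v a b (p : pt R) :
  in_cell k j u v a b p = strip a p.1 j u && strip b p.2 j v.
Proof. by rewrite /in_cell /strip !andbA. Qed.

Lemma strip_uniq t x j u u' : strip t x j u -> strip t x j u' -> u = u'.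
Proof.
move=> /andP[h1 h2] /andP[h3 h4].
have sp := side_gt0 j.
have A : forall m n : nat, t - Dl + m%:R * s j <= x -> x < t - Dl + n.+1%:R * s j -> (m <= n)%N.
  move=> m n H1 H2; have : m%:R * s j < n.+1%:R * s j.
    by apply: le_lt_trans _ (_ : x - t + Dl < _); rewrite ?ltrBlDr; lra.
  by rewrite ltr_pM2r // ltr_nat ltnS.
by apply/eqP; rewrite eqn_leq (A _ _ h1 h4) (A _ _ h3 h2).
Qed.

Lemma sum_uniq_le1 (I : finType) (c : pred I) :
  (forall i i', c i -> c i' -> i = i') -> \sum_i (c i)%:R <= 1 :> R.
Proof.
move=> U; case: (pickP c) => [i0 H|N].
  rewrite (bigD1 i0) //= H big1 ?addr0 // => i /negbTE ne.
  by case Hi: (c i) => //; move: ne; rewrite (U _ _ Hi H) eqxx.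
by rewrite big1 // => i _; rewrite N.
Qed.

Lemma cell_uniq j a b (p : pt R) :
  \sum_(c : 'I_(ncells k j) * 'I_(ncells k j)) (in_cell k j c.1 c.2 a b p)%:R <= 1 :> R.
Proof.
apply: (sum_uniq_le1 (c := fun c : 'I_(ncells k j) * 'I_(ncells k j) => in_cell k j c.1 c.2 a b p)).
move=> [u v] [u' v']; rewrite !in_cellE /= => /andP[h1 h2] /andP[h3 h4].
have e1 := strip_uniq h1 h3; have e2 := strip_uniq h2 h4.
by congr pair; apply: val_inj.
Qed.

Definition betw (x y L : R) : bool := (Num.min x y < L) && (L <= Num.max x y).

Lemma betwC x y L : betw x y L = betw y x L.
Proof. by rewrite /betw minC maxC. Qed.

Lemma betw_intro x y L : (x < L <= y) || (y < L <= x) -> betw x y L.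
Proof.
rewrite /betw; case: (leP x y) => h.
  move=> /orP[//|/andP[h1 h2]]; apply/andP; lra.
move=> /orP[/andP[h1 h2]|//]; apply/andP; lra.
Qed.

Definition Lf (j : nat) (x y t : R) : R :=
  \sum_(m < (ncells k j).+1) (betw x y (t - Dl + m%:R * s j))%:R.

Lemma Lf_ge0 j x y t : 0 <= Lf j x y t.
Proof. by apply: sumr_ge0 => m _; rewrite ler0n. Qed.

Lemma LfC j x y t : Lf j x y t = Lf j y x t.
Proof. by apply: eq_bigr => m _; rewrite betwC. Qed.

Lemma Lf_ge1 j x y t (m : nat) : (m <= ncells k j)%N ->
  betw x y (t - Dl + m%:R * s j) -> 1 <= Lf j x y t.
Proof.
move=> hm hb; rewrite /Lf (bigD1 (Ordinal (n:=(ncells k j).+1) (m:=m) hm)) //= hb.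
by rewrite lerDl; apply: sumr_ge0 => i _; rewrite ler0n.
Qed.

Lemma sep_strip j t x y (u : nat) : (u < ncells k j)%N ->
  strip t x j u -> ~~ strip t y j u -> 1 <= Lf j x y t.
Proof.
move=> hu /andP[h1 h2]; rewrite /strip negb_and -!ltNge -leNgt => /orP[h|h].
  apply: (Lf_ge1 (m := u)); first exact: ltnW.
  by apply: betw_intro; apply/orP; right; apply/andP; split.
apply: (Lf_ge1 (m := u.+1)) => //.
by apply: betw_intro; apply/orP; left; apply/andP; split.
Qed.


Local Notation cellT j := ('I_(ncells k j) * 'I_(ncells k j))%type.

Lemma sep_cell j a b (p q : pt R) (c : cellT j) :
  in_cell k j c.1 c.2 a b p -> ~~ in_cell k j c.1 c.2 a b q ->
  1 <= Lf j p.1 q.1 a + Lf j p.2 q.2 b.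
Proof.
rewrite !in_cellE => /andP[h1 h2]; rewrite negb_and => /orP[h|h].
  by apply: le_trans (sep_strip (ltn_ord _) h1 h) _; rewrite lerDl Lf_ge0.
by apply: le_trans (sep_strip (ltn_ord _) h2 h) _; rewrite lerDr Lf_ge0.
Qed.

Lemma K2 j a b (p q : pt R) :
  \sum_(c : cellT j) `|(in_cell k j c.1 c.2 a b p)%:R - (in_cell k j c.1 c.2 a b q)%:R|
  <= 2 * (Lf j p.1 q.1 a + Lf j p.2 q.2 b) :> R.
Proof.
set W := Lf j p.1 q.1 a + Lf j p.2 q.2 b.
have W0 : 0 <= W by rewrite addr_ge0 ?Lf_ge0.
apply: le_trans (_ : \sum_(c : cellT j) ((in_cell k j c.1 c.2 a b p)%:R * W
   + (in_cell k j c.1 c.2 a b q)%:R * W) <= _).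
  apply: ler_sum => c _.
  case hp: (in_cell k j c.1 c.2 a b p); case hq: (in_cell k j c.1 c.2 a b q) => /=.
  - by rewrite subrr normr0 !mul1r addr_ge0.
  - rewrite subr0 normr1 mul1r mul0r addr0.
    by apply: (sep_cell (c := c)); rewrite ?hp ?hq.
  - rewrite sub0r normrN normr1 mul1r mul0r add0r.
    have := @sep_cell j a b q p c; rewrite hp hq (LfC j q.1) (LfC j q.2) => H.
    exact: H.
  - by rewrite subrr normr0 !mul0r addr0.
rewrite big_split /= -!mulr_suml mulr2n mulrDl !mul1r.
by rewrite lerD // ler_piMl // cell_uniq.
Qed.

Definition nt j u v (a b : R) : R := (~~ `[< terminal k j u v a b >])%:R.

Lemma K3 j a b (p : pt R) :
  \sum_(c : cellT j) nt j c.1 c.2 a b * (in_cell k j c.1 c.2 a b p)%:R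
  <= Lf j p.1 p.2 a.
Proof.
apply: le_trans (_ : \sum_(c : cellT j) (in_cell k j c.1 c.2 a b p)%:R * Lf j p.1 p.2 a <= _).
  apply: ler_sum => [[u v]] _ /=; rewrite /nt.
  case hp: (in_cell k j u v a b p); last by rewrite !mulr0 mul0r.
  case: asboolP => /= T; first by rewrite mul0r mul1r Lf_ge0.
  rewrite !mul1r.
  move: hp; rewrite in_cellE => /andP[/andP[h1 h2] /andP[h3 h4]].
  have sp := side_gt0 j.
  set A := a - Dl + u%:R * s j; set A' := a - Dl + u.+1%:R * s j.
  set B := b - Dl + v%:R * s j; set B' := b - Dl + v.+1%:R * s j.
  have AA : A < A' by rewrite /A /A' -addn1 natrD mulrDl mul1r addrA ltrDl.
  have BB : B < B' by rewrite /B /B' -addn1 natrD mulrDl mul1r addrA ltrDl.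
  case: (leP A' B) => hAB.
    apply: (Lf_ge1 (m := u.+1)); first exact: ltn_ord.
    by apply: betw_intro; apply/orP; left; apply/andP; split; [exact: h2|exact: le_trans hAB h3].
  case: (leP B' A) => hBA.
    apply: (Lf_ge1 (m := u)); first exact: ltnW.
    by apply: betw_intro; apply/orP; right; apply/andP; split; [exact: lt_le_trans h4 hBA|exact: h1].
  exfalso; apply: T.
  case: (leP A B) => hAB2.
    exists B; rewrite in_cellE /strip /= -/A -/A' -/B -/B'.
    by apply/andP; split; apply/andP; split; lra.
  exists A; rewrite in_cellE /strip /= -/A -/A' -/B -/B'.
  by apply/andP; split; apply/andP; split; lra.
rewrite -mulr_suml; apply: ler_piMl; first exact: Lf_ge0.
exact: cell_uniq.
Qed.


Lemma count_sumR (c : pred (pt R)) (S : seq (pt R)) :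
  (count c S)%:R = \sum_(i < size S) (c (nth (0,0) S i))%:R :> R.
Proof.
elim: S => [|x S IH]; first by rewrite big_ord0.
by rewrite /= big_ord_recl /= natrD IH.
Qed.

Lemma K4 (P Q : seq (pt R)) (f : {ffun 'I_(size P) -> option 'I_(size Q)})
  (hf : is_aug_matching f) (c : pred (pt R)) :
  `|(count c P)%:R - (count c Q)%:R|
  <= \sum_(i < size P) (match f i with
        | Some q => `|(c (nth (0,0) P i))%:R - (c (nth (0,0) Q q))%:R|
        | None => (c (nth (0,0) P i))%:R end)
     + \sum_(q < size Q | [forall i, f i != Some q]) (c (nth (0,0) Q q))%:R :> R.
Proof.
set eP := fun i : 'I_(size P) => (c (nth (0,0) P i))%:R : R.
set eQ := fun q : 'I_(size Q) => (c (nth (0,0) Q q))%:R : R.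
set mQ := fun i => match f i with Some q => eQ q | None => 0 end.
have perq : forall q, eQ q = \sum_i (f i == Some q)%:R * eQ q
                         + ([forall i, f i != Some q])%:R * eQ q.
  move=> q; case: (boolP [forall i, f i != Some q]) => H.
    rewrite big1 ?add0r ?mul1r // => i _.
    by move/forallP: H => /(_ i) /negbTE ->; rewrite mul0r.
  rewrite mul0r addr0; move: H; rewrite negb_forall => /existsP[i0].
  rewrite negbK => /eqP e0.
  rewrite (bigD1 i0) //= e0 eqxx mul1r big1 ?addr0 // => i ne.
  suff -> : (f i == Some q) = false by rewrite mul0r.
  apply/negbTE/eqP => ei; move/eqP: ne; apply.
  move/forallP: hf => /(_ i0) /forallP /(_ i); rewrite e0 ei eqxx /= => /eqP.
  by [].
have sQ : \sum_q eQ q = \sum_i mQ i + \sum_(q | [forall i, f i != Some q]) eQ q.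
  transitivity (\sum_q (\sum_i (f i == Some q)%:R * eQ q
                         + ([forall i, f i != Some q])%:R * eQ q)).
    by apply: eq_bigr => q _; exact: perq.
  rewrite big_split /=; congr (_ + _).
    rewrite exchange_big /=; apply: eq_bigr => i _; rewrite /mQ.
    case: (f i) => [q0|].
      rewrite (bigD1 q0) //= eqxx mul1r big1 ?addr0 // => q ne.
      case: eqP => [[e]|_]; last by rewrite mul0r.
      by move: ne; rewrite e eqxx.
    by rewrite big1 // => q _; rewrite mul0r.
  rewrite [RHS]big_mkcond /=; apply: eq_bigr => q _.
  by case: ifP => _; rewrite ?mul1r ?mul0r.
rewrite !count_sumR -/eP -/eQ.
rewrite -/(\sum_(q < size Q) eQ q) sQ opprD addrA -sumrB.
apply: le_trans (ler_normB _ _) _; apply: lerD.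
  apply: le_trans (ler_norm_sum _ _ _) _; apply: ler_sum => i _; rewrite /mQ.
  by case: (f i) => [q|]; rewrite ?subr0 ?normr_nat.
by rewrite ger0_norm // sumr_ge0 // => q _; rewrite /eQ ler0n.
Qed.


Section Level.
Variables (P Q : seq (pt R)) (f : {ffun 'I_(size P) -> option 'I_(size Q)}).
Hypothesis hf : is_aug_matching f.
Local Notation Pn i := (nth (0,0) P i).
Local Notation Qn q := (nth (0,0) Q q).

Definition H1 j (a : R) : R :=
  \sum_(i < size P) (match f i with
     | Some q => 2 * Lf j (Pn i).1 (Qn q).1 a
     | None => Lf j (Pn i).1 (Pn i).2 a end)
  + \sum_(q < size Q | [forall i, f i != Some q]) Lf j (Qn q).1 (Qn q).2 a.

Definition H2 j (b : R) : R :=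
  \sum_(i < size P) (match f i with
     | Some q => 2 * Lf j (Pn i).2 (Qn q).2 b
     | None => 0 end).

Lemma level_bound j a b :
  \sum_(u < ncells k j) \sum_(v < ncells k j) cell_term k j u v a b P Q
  <= H1 j a + H2 j b.
Proof.
rewrite pair_bigA /=.
set e := fun (c : cellT j) (p : pt R) => (in_cell k j c.1 c.2 a b p)%:R : R.
set T := fun (c : cellT j) (i : 'I_(size P)) => match f i with
     | Some q => `|e c (Pn i) - e c (Qn q)|
     | None => nt j c.1 c.2 a b * e c (Pn i) end.
apply: le_trans (_ : \sum_(c : cellT j) (\sum_i T c i
   + \sum_(q < size Q | [forall i, f i != Some q]) nt j c.1 c.2 a b * e c (Qn q)) <= _).
  apply: ler_sum => c _; rewrite /cell_term /nt.
  case: asboolP => /= Tm.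
    apply: addr_ge0; apply: sumr_ge0 => i _; rewrite /T /e ?mulr_ge0 ?ler0n //.
    by case: (f i) => [q|]; rewrite ?mulr_ge0 ?ler0n.
  rewrite /T /nt; case: asboolP => //= _.
  under eq_bigr do rewrite mul1r.
  under [X in _ <= _ + X]eq_bigr do rewrite mul1r.
  exact: (K4 hf (in_cell k j c.1 c.2 a b)).
rewrite big_split /= exchange_big /= [X in _ + X <= _]exchange_big /=.
rewrite /H1 -addrA [X in _ <= _ + X]addrC addrA -big_split /=.
apply: lerD; apply: ler_sum => i _.
  rewrite /T; case: (f i) => [q|].
    by rewrite -mulrDr; apply: K2.
  by rewrite addr0; apply: K3.
exact: K3.
Qed.

End Level.

End Comb.


Section Geo.
Variable R : realType.

Lemma abs1_le (p q : pt R) : `|p.1 - q.1| <= dist2 p q.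
Proof.
by rewrite /dist2 -sqrtr_sqr ler_sqrt ?lerDl ?sqr_ge0 // addr_ge0 ?sqr_ge0.
Qed.

Lemma abs2_le (p q : pt R) : `|p.2 - q.2| <= dist2 p q.
Proof.
by rewrite /dist2 -sqrtr_sqr ler_sqrt ?lerDr ?sqr_ge0 // addr_ge0 ?sqr_ge0.
Qed.

Lemma dist2C (p q : pt R) : dist2 p q = dist2 q p.
Proof.
by rewrite /dist2 -[(p.1 - q.1)^+2]sqrrN -[(p.2 - q.2)^+2]sqrrN !opprB.
Qed.

Lemma distL_E (p : pt R) : dist2 p (Defs.proj p) = Num.sqrt ((p.1 - p.2) ^+ 2 / 2).
Proof. rewrite /dist2 /Defs.proj /=; by congr Num.sqrt; field. Qed.

Lemma diag_le (p : pt R) : `|p.1 - p.2| <= 2 * dist2 p (Defs.proj p).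
Proof.
rewrite distL_E; set d := p.1 - p.2.
have y0 : 0 <= Num.sqrt (d ^+ 2 / 2) by [].
have y2 : Num.sqrt (d ^+ 2 / 2) ^+ 2 = d ^+ 2 / 2 by rewrite sqr_sqrtr // divr_ge0 ?sqr_ge0.
have n0 : 0 <= `|d| by [].
have n2 : `|d| ^+ 2 = d ^+ 2 by rewrite real_normK // num_real.
move: y0 y2 n0 n2; set y := Num.sqrt _; set n := `|d|.
move=> y0 y2 n0 n2; nra.
Qed.

Lemma box0_distL (p : pt R) : in_box 0 p -> distL p < 1.
Proof.
rewrite /in_box /Delta expr0 => /andP[/andP[h1 h2] /andP[h3 h4]].
rewrite /distL distL_E -sqrtr1 ltr_sqrt //.
have : (p.1 - p.2) ^+ 2 <= 1 by nra.
move=> H. rewrite ltr_pdivrMr // sqrtr1 mul1r. lra.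
Qed.

End Geo.


Section GoodL.
Variable R : realType.
Variable k : nat.
Local Notation Dl := (Delta R k).
Local Notation D := (`[0%R, Dl]%classic : set R).

Lemma Good_L j (x y : R) :
  Good D (Lf k j x y) ((ncells k j).+1%:R * `|x - y|).
Proof.
have mD : measurable D by [].
set n := (ncells k j).+1.
apply: (Good_le (g := Lf k j x y) (B := \sum_(m < n) `|x - y|)).
  by rewrite sumr_const card_ord mulr_natl.
apply: (Good_ext (g := fun t => \sum_(m < n)
   ((Num.min x y + Dl - m%:R * side R j < t) && (t <= Num.max x y + Dl - m%:R * side R j))%:R)).
  move=> t; rewrite /Lf; apply: eq_bigr => m _; congr (_%:R).
  congr nat_of_bool; rewrite /betw; apply/idP/idP => /andP[h1 h2]; apply/andP; split; lra.
apply: (Good_sum mD) => m _.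
have -> : `|x - y| = (Num.max x y + Dl - m%:R * side R j) - (Num.min x y + Dl - m%:R * side R j).
  case: (leP x y) => h.
    by rewrite distrC ger0_norm ?subr_ge0 //; ring.
  by rewrite ger0_norm ?subr_ge0 ?(ltW h) //; ring.
apply: (Good_ind mD) => //.
by rewrite lerD2r lerD2r; case: (leP x y) => h //; exact: ltW.
Qed.

End GoodL.


Section Final.
Variable R : realType.
Variable k : nat.
Local Notation Dl := (Delta R k).
Local Notation D := (`[0%R, Dl]%classic : set R).
Variables (P Q : seq (pt R)) (f : {ffun 'I_(size P) -> option 'I_(size Q)}).
Hypothesis hf : is_aug_matching f.
Local Notation Pn i := (nth (0,0) P i).
Local Notation Qn q := (nth (0,0) Q q).

Definition W1 : R :=
  \sum_(i < size P) (match f i with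
     | Some q => 2 * `|(Pn i).1 - (Qn q).1|
     | None => `|(Pn i).1 - (Pn i).2| end)
  + \sum_(q < size Q | [forall i, f i != Some q]) `|(Qn q).1 - (Qn q).2|.

Definition W2 : R :=
  \sum_(i < size P) (match f i with
     | Some q => 2 * `|(Pn i).2 - (Qn q).2|
     | None => 0 end).

Let mD : measurable D. Proof. by []. Qed.

Lemma Good_H1 j : Good D (H1 k f j) ((ncells k j).+1%:R * W1).
Proof.
set n : R := (ncells k j).+1%:R.
have n0 : 0 <= n by rewrite ler0n.
rewrite (_ : n * W1 = \sum_(i < size P) (match f i with
     | Some q => 2 * (n * `|(Pn i).1 - (Qn q).1|)
     | None => n * `|(Pn i).1 - (Pn i).2| end)
  + \sum_(q < size Q | [forall i, f i != Some q]) (n * `|(Qn q).1 - (Qn q).2|)).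
  apply: (Good_ext (g := fun a => \sum_(i < size P) (match f i with
     | Some q => 2 * Lf k j (Pn i).1 (Qn q).1 a
     | None => Lf k j (Pn i).1 (Pn i).2 a end)
  + \sum_(q < size Q | [forall i, f i != Some q]) Lf k j (Qn q).1 (Qn q).2 a)) => //.
  apply: (Good_add mD); apply: (Good_sum mD) => i _; last exact: Good_L.
  case: (f i) => [q|]; last exact: Good_L.
  by apply: (Good_scale mD) => //; exact: Good_L.
rewrite /W1 mulrDr mulr_sumr mulr_sumr; congr (_ + _).
by apply: eq_bigr => i _; case: (f i) => [q|] //; rewrite mulrCA.
Qed.

Lemma Good_H2 j : Good D (H2 k f j) ((ncells k j).+1%:R * W2).
Proof.
set n : R := (ncells k j).+1%:R.
have n0 : 0 <= n by rewrite ler0n.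
rewrite (_ : n * W2 = \sum_(i < size P) (match f i with
     | Some q => 2 * (n * `|(Pn i).2 - (Qn q).2|)
     | None => 0 end)).
  apply: (Good_ext (g := fun b => \sum_(i < size P) (match f i with
     | Some q => 2 * Lf k j (Pn i).2 (Qn q).2 b
     | None => 0 end))) => //.
  apply: (Good_sum mD) => i _.
  case: (f i) => [q|]; last exact: Good_0.
  by apply: (Good_scale mD) => //; exact: Good_L.
rewrite /W2 mulr_sumr.
by apply: eq_bigr => i _; case: (f i) => [q|]; rewrite ?mulr0 // mulrCA.
Qed.

Definition G1 (a : R) := \sum_(j < k.+2) side R j * H1 k f j a.
Definition G2 (b : R) := \sum_(j < k.+2) side R j * H2 k f j b.

Lemma Good_G1 : Good D G1 (\sum_(j < k.+2) side R j * ((ncells k j).+1%:R * W1)).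
Proof.
apply: (Good_sum mD) => j _; apply: (Good_scale mD); last exact: Good_H1.
exact: ltW (side_gt0 _ _).
Qed.

Lemma Good_G2 : Good D G2 (\sum_(j < k.+2) side R j * ((ncells k j).+1%:R * W2)).
Proof.
apply: (Good_sum mD) => j _; apply: (Good_scale mD); last exact: Good_H2.
exact: ltW (side_gt0 _ _).
Qed.

Lemma dT_ge0 a b : 0 <= dTper k a b P Q.
Proof.
apply: sumr_ge0 => j _; apply: mulr_ge0; first exact: ltW (side_gt0 _ _).
apply: sumr_ge0 => u _; apply: sumr_ge0 => v _; rewrite /cell_term.
by case: ifP.
Qed.

Lemma dT_le a b : dTper k a b P Q <= G1 a + G2 b.
Proof.
rewrite /dTper /G1 /G2 -big_split /=; apply: ler_sum => j _.
rewrite -mulrDr; apply: ler_wpM2l; first exact: ltW (side_gt0 _ _).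
exact: level_bound.
Qed.

End Final.


Section Arith.
Variable R : realType.
Variable k : nat.
Local Notation Dl := (Delta R k).

Lemma Dl_gt0 : 0 < Dl.
Proof. by rewrite /Delta exprn_gt0. Qed.

Lemma side_ncells j : (j < k.+2)%N -> side R j * (ncells k j).+1%:R <= 3 * Dl.
Proof.
move=> hj; rewrite -addn1 natrD mulrDr mulr1 /side /ncells natrX.
have e : 2 ^+ j / 2 * (2:R) ^+ (k + 2 - j) = 2 * Dl.
  rewrite mulrAC -exprD subnKC; last by rewrite addn2; apply: ltnW.
  by rewrite /Delta addn2 !exprS; field.
rewrite e.
have : 2 ^+ j / 2 <= Dl.
  rewrite ler_pdivrMr // /Delta -exprSr ler_eXn2l //.
  lra.
lra.
Qed.

End Arith.

Section Final2.
Variable R : realType.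
Variable k : nat.
Local Notation Dl := (Delta R k).
Variables (P Q : seq (pt R)) (f : {ffun 'I_(size P) -> option 'I_(size Q)}).
Hypothesis hf : is_aug_matching f.

Lemma W_ge0 : 0 <= W1 f + W2 f.
Proof.
apply: addr_ge0; [apply: addr_ge0|]; apply: sumr_ge0 => i _ //.
  by case: (f i) => [q|]; rewrite ?mulr_ge0.
by case: (f i) => [q|]; rewrite ?mulr_ge0.
Qed.

Lemma W_le : W1 f + W2 f <= 4 * matching_cost f.
Proof.
rewrite /W1 /W2 /matching_cost addrAC -big_split /= mulrDr mulr_sumr mulr_sumr.
apply: lerD; apply: ler_sum => i _.
  case: (f i) => [q|].
    have := abs1_le (nth (0,0) P i) (nth (0,0) Q q).
    have := abs2_le (nth (0,0) P i) (nth (0,0) Q q); lra.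
  have := diag_le (nth (0,0) P i).
  have := normr_ge0 ((nth (0,0) P i).1 - (nth (0,0) P i).2); lra.
rewrite dist2C.
have := diag_le (nth (0,0) Q i).
have := normr_ge0 ((nth (0,0) Q i).1 - (nth (0,0) Q i).2); lra.
Qed.

Let D := (`[0%R, Dl]%classic : set R).

Lemma main_bound :
  (((Dl ^+ 2)^-1)%:E *
      (\int[@lebesgue_measure R]_(a in D)
         (\int[@lebesgue_measure R]_(b in D)
            (dTper k a b P Q)%:E))
    <= (12 * (k.+2)%:R * matching_cost f)%:E)%E.
Proof.
have D0 := Dl_gt0 R k.
have := two_dim (ltW D0) (dT_ge0 k P Q) (dT_le k hf) (Good_G1 k f) (Good_G2 k f).
move=> H; apply: le_trans (lee_wpmul2l _ H) _.
  by rewrite lee_fin invr_ge0 exprn_ge0 // ltW.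
rewrite -EFinM lee_fin.
rewrite -big_split /=.
set S := \sum_(j < k.+2) _.
have S1 : S <= \sum_(j < k.+2) (3 * Dl) * (W1 f + W2 f).
  apply: ler_sum => j _; rewrite -mulrDr -mulrDr mulrA.
  by apply: ler_wpM2r; [exact: W_ge0 | exact: side_ncells].
rewrite sumr_const card_ord in S1.
have W4 := W_le.
have W0 := W_ge0.
have -> : Dl ^- 2 * (S * Dl) = S / Dl.
  by rewrite expr2; field; rewrite gt_eqF.
rewrite ler_pdivrMr //.
apply: le_trans S1 _.
rewrite -mulr_natl.
have Ecost : 0 <= matching_cost f by lra.
set c := matching_cost f in W4 Ecost *. set w := W1 f + W2 f in W4 W0 *. set K := (k.+2)%:R.
have K0 : 0 <= K by rewrite ler0n.
rewrite -[_ *+ k.+2]mulr_natl -/K.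
have KD : 0 <= K * Dl by rewrite mulr_ge0 // ltW.
have h : 3 * w <= 12 * c by lra.
nra.
Qed.

End Final2.


Lemma dW_attained (R : realType) (P Q : seq (pt R)) :
  exists f : {ffun 'I_(size P) -> option 'I_(size Q)},
    is_aug_matching f /\ dW P Q = matching_cost f.
Proof.
rewrite /dW.
apply: (big_ind (fun x => exists f : {ffun 'I_(size P) -> option 'I_(size Q)},
    is_aug_matching f /\ x = matching_cost f)).
- exists (empty_matching _ _); split => //.
  by apply/forallP => i; apply/forallP => i'; rewrite /empty_matching ffunE.
- move=> x y [fx [hx ex]] [fy [hy ey]].
  by case: (leP x y) => _; [exists fx | exists fy].
- by move=> g hg; exists g.
Qed.

Lemma empty_k0 (R : realType) (P Q : seq (pt R)) :
  standing_assumptions 0 P Q -> size P = 0%N /\ size Q = 0%N.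
Proof.
case=> _ [hd _] hb.
have H : forall p, p \in P ++ Q -> False.
  move=> p hp; have := hd p hp; have := box0_distL (allP hb p hp); lra.
split.
  case: P H {hd hb} => [//|p P'] H; exfalso; apply: (H p); by rewrite inE eqxx.
case: Q H {hd hb} => [//|q Q'] H; exfalso; apply: (H q).
by rewrite mem_cat mem_head orbT.
Qed.

Local Open Scope classical_set_scope.

Theorem lemma9 (R : realType) :
  exists C' : R, forall (k : nat) (P Q : seq (pt R)),
    standing_assumptions k P Q ->
    (((Delta R k ^+ 2)^-1)%:E *
      (\int[@lebesgue_measure R]_(a in `[0%R, Delta R k]%classic)
         (\int[@lebesgue_measure R]_(b in `[0%R, Delta R k]%classic)
            (dTper k a b P Q)%:E))
    <= (C' * k%:R * dW P Q)%:E)%E.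
Proof.
exists 36 => k P Q SA.
have [f [hf ->]] := dW_attained P Q.
apply: le_trans (main_bound k hf) _; rewrite lee_fin.
have c0 : 0 <= matching_cost f.
  by have := W_ge0 f; have := W_le f; lra.
case: k SA => [|k] SA.
  have [sP sQ] := empty_k0 SA.
  have -> : matching_cost f = 0.
    rewrite /matching_cost big1; last first.
      by move=> i _; exfalso; move: (ltn_ord i); rewrite {2}sP.
    rewrite big1 ?addr0 // => q _; exfalso; move: (ltn_ord q); by rewrite {2}sQ.
  by rewrite !mulr0.
have k1 : 1 <= k.+1%:R :> R by rewrite ler1n.
have -> : (k.+3)%:R = k.+1%:R + 2 :> R by rewrite -natrD addn2.
set K := k.+1%:R in k1 *.
nra.
Qed.
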